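(* For any stable set $\Pi$ of forward-looking tree-profiles, the spi-logic $\mathsf{SPi}+\Sigma'_\Pi$, where $\Sigma'_\Pi=\{\iota'_\pi\mid\pi\in\Pi\}$, is complete.
   Context: Fix a non-empty signature $\mathcal R$. Sp-formulas: built from propositional variables and $\top$ with $\wedge$ and diamonds $\Diamond_R$ ($R\in\mathcal R$); sp-implications $\sigma\to\tau$. A SLO is an algebra $(A,\wedge,\top,\Diamond_R)_R$ with $(A,\wedge,\top)$ a meet-semilattice with top $\top$ and each $\Diamond_R$ monotone; it validates $\sigma\to\tau$ if $\sigma[\mathfrak a]\le\tau[\mathfrak a]$ for all valuations. Frames $\mathfrak F=(W,R^{\mathfrak F})_R$ with standard Kripke semantics. $\Sigma\models_{\mathsf{Kr}}\iota$ (resp. $\models_{\mathsf{SLO}}$): $\iota$ valid in all frames (resp. SLOs) validating $\Sigma$. The spi-logic $\mathsf{SPi}+\Sigma=\{\iota\mid\Sigma\models_{\mathsf{SLO}}\iota\}$ is complete if $\Sigma\models_{\mathsf{Kr}}\iota\iff\Sigma\models_{\mathsf{SLO}}\iota$ for all $\iota$. A homomorphism $h:\mathfrak F_1\to\mathfrak F_2$ of frames is a map with $(x,y)\in R^{\mathfrak F_1}\Rightarrow(h(x),h(y))\in R^{\mathfrak F_2}$ for all $R$. A frame is a tree if $(W,\bigcup_RR^{\mathfrak F})$ is a finite directed tree and the relations are pairwise disjoint. A profile $\pi=(\mathfrak G,S,u,v)$ consists of a finite rooted frame $\mathfrak G=(\Delta,R^{\mathfrak G})_R$, $u,v\in\Delta$,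 $S\in\mathcal R$ with $(u,v)\notin S^{\mathfrak G}$; it represents $\Phi_\pi=\forall\bar x\big(\bigwedge_{(x_i,x_j)\in R^{\mathfrak G}}R(x_i,x_j)\to S(u,v)\big)$ (universal closure over $\Delta$). It is a tree-profile if $\mathfrak G$ is a tree, and forward-looking if $u<_{\mathfrak G}v$, where $<_{\mathfrak G}$ is the transitive closure of $\bigcup_R R^{\mathfrak G}$. For a set $\Pi$ of profiles and a frame $\mathfrak F$, $\Pi(\mathfrak F)$ is the smallest frame on the same domain extending $\mathfrak F$ (relation-wise) that satisfies $\Phi_\pi$ for all $\pi\in\Pi$. $\Pi$ is stable if for every $\pi=(\mathfrak G,S,u,v)\in\Pi$ and every tree $\mathfrak T$, every homomorphism $\mathfrak G\to\Pi(\mathfrak T)$ is also a homomorphism $\mathfrak G\to\mathfrak T$. For a model $\mathfrak N=(\mathfrak F,\mathfrak v)$ over a finite frame with root $r$ and no directed cycles, where only finitely many variables are non-empty, define inductively $\mathrm{for}^{\mathfrak N}_w=\bigwedge_{w\in\mathfrak v(p)}p\wedge\bigwedge_{(w,v)\in R^{\mathfrak F},R\in\mathcal R}\Diamond_R\,\mathrm{for}^{\mathfrak N}_v$ (empty conjunction $=\top$) and $\mathrm{for}(\mathfrak N)=\mathrm{for}^{\mathfrak N}_r$. For a forward-looking tree-profile $\pi=(\mathfrak G,S,u,v)$ take a variable $p_x$ for each $x\in\Delta$, the valuation $\mathfrak v(p_x)=\{x\}$, $\mathfrak M=(\mathfrak G,\mathfrak v)$ and $\mathfrak M'=(\mathfrak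 G',\mathfrak v)$ where $\mathfrak G'$ equals $\mathfrak G$ except $S^{\mathfrak G'}=S^{\mathfrak G}\cup\{(u,v)\}$; then $\iota'_\pi=\big(\mathrm{for}(\mathfrak M)\to\mathrm{for}(\mathfrak M')\big)$. *)

(* Defs.v *)
From Stdlib Require List.
From mathcomp Require Import all_boot.
Set Implicit Arguments.
Unset Strict Implicit.
Unset Printing Implicit Defensive.

Section SPI.
Variable Sig : Type.

Inductive form : Type :=
  | Var of nat
  | Top
  | And of form & form
  | Dia of Sig & form.

Record impl : Type := Impl { ante : form; cons_ : form }.

Fixpoint bigconj (l : seq form) : form :=
  match l with
  | [::] => Top
  | [:: a] => a
  | a :: l' => And a (bigconj l')
  end.

Definition frel (W : Type) := Sig -> W -> W -> Prop.

Fixpoint sat (W : Type) (F : frel W) (val : nat -> W -> Prop) (phi : form) (w : W)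
  : Prop :=
  match phi with
  | Var p => val p w
  | Top => True
  | And a b => sat F val a w /\ sat F val b w
  | Dia R a => exists v, F R w v /\ sat F val a v
  end.

Definition frame_valid (W : Type) (F : frel W) (i : impl) : Prop :=
  forall (val : nat -> W -> Prop) (w : W), sat F val (ante i) w -> sat F val (cons_ i) w.

Definition Kr_conseq (Sigma : impl -> Prop) (i : impl) : Prop :=
  forall (W : Type) (F : frel W),
    (forall s, Sigma s -> frame_valid F s) -> frame_valid F i.

Record SLO : Type := MkSLO {
  car :> Type;
  meet : car -> car -> car;
  top : car;
  dia : Sig -> car -> car;
  meetA : forall x y z, meet x (meet y z) = meet (meet x y) z;
  meetC : forall x y, meet x y = meet y x;
  meetxx : forall x, meet x x = x;
  meetxT : forall x, meet x top = x;
  dia_mono : forall R x y, meet x y = x -> meet (dia R x) (dia R y) = dia R x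
}.

Definition sle (A : SLO) (x y : A) : Prop := meet x y = x.

Fixpoint eval (A : SLO) (a : nat -> A) (phi : form) : A :=
  match phi with
  | Var p => a p
  | Top => top A
  | And x y => meet (eval a x) (eval a y)
  | Dia R x => dia R (eval a x)
  end.

Definition slo_valid (A : SLO) (i : impl) : Prop :=
  forall a : nat -> A, sle (eval a (ante i)) (eval a (cons_ i)).

Definition SLO_conseq (Sigma : impl -> Prop) (i : impl) : Prop :=
  forall A : SLO, (forall s, Sigma s -> slo_valid A s) -> slo_valid A i.

Definition complete (Sigma : impl -> Prop) : Prop :=
  forall i : impl, Kr_conseq Sigma i <-> SLO_conseq Sigma i.

Definition edge (W : Type) (F : frel W) (x y : W) : Prop := exists R, F R x y.

Inductive tclos (W : Type) (e : W -> W -> Prop) : W -> W -> Prop :=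
  | tc_step x y : e x y -> tclos e x y
  | tc_trans x y z : e x y -> tclos e y z -> tclos e x z.

Definition rtclos (W : Type) (e : W -> W -> Prop) (x y : W) : Prop :=
  x = y \/ tclos e x y.

Definition is_tree_rooted_at (W : Type) (F : frel W) (r : W) : Prop :=
  [/\ forall x, ~ edge F x r,
      forall y, y <> r -> exists! x, edge F x y,
      forall y, rtclos (edge F) r y
    & forall R R' x y, F R x y -> F R' x y -> R = R'].

Definition is_tree (m : nat) (F : frel 'I_m) : Prop :=
  exists r, is_tree_rooted_at F r.

Definition is_hom (W1 W2 : Type) (F1 : frel W1) (F2 : frel W2) (h : W1 -> W2) : Prop :=
  forall R x y, F1 R x y -> F2 R (h x) (h y).

(* A finite frame whose relations have finitely many edges is given by a
   duplicate-free list of labelled edges (R, x, y) over the domain 'I_n;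
   every tree-profile is of this form.  proot is the root of the frame. *)
Record profile : Type := Profile {
  pn : nat;
  proot : 'I_pn;
  pE : seq (Sig * 'I_pn * 'I_pn);
  pS : Sig;
  pu : 'I_pn;
  pv : 'I_pn
}.

Definition pframe (pi : profile) : frel 'I_(pn pi) :=
  fun R x y => List.In (R, x, y) (pE pi).
Arguments pframe : clear implicits.

Definition fl_tree_profile (pi : profile) : Prop :=
  [/\ List.NoDup (pE pi),
      is_tree_rooted_at (pframe pi) (proot pi),
      ~ pframe pi (pS pi) (pu pi) (pv pi)
    & tclos (edge (pframe pi)) (pu pi) (pv pi)].

Definition sat_Phi (W : Type) (F : frel W) (pi : profile) : Prop :=
  forall h : 'I_(pn pi) -> W, is_hom (pframe pi) F h -> F (pS pi) (h (pu pi)) (h (pv pi)).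

(* Pi(F): the smallest frame on the same domain extending F and satisfying
   every Phi_pi, pi in Pi (intersection of all such frames) *)
Definition closure (Pi : profile -> Prop) (W : Type) (F : frel W) : frel W :=
  fun R x y => forall F' : frel W,
    (forall R' x' y', F R' x' y' -> F' R' x' y') ->
    (forall pi, Pi pi -> sat_Phi F' pi) -> F' R x y.

Definition stable (Pi : profile -> Prop) : Prop :=
  forall pi, Pi pi ->
  forall (m : nat) (T : frel 'I_m), is_tree T ->
  forall h : 'I_(pn pi) -> 'I_m,
    is_hom (pframe pi) (closure Pi T) h -> is_hom (pframe pi) T h.

(* for a model on 'I_n whose frame is given by the edge list E and whose
   valuation is v(p_x) = {x} (p_x = Var x):
   for_w = p_w /\ /\_{(R,w,v) in E} <>_R for_v.
   The fuel k is only there for structural recursion; with k = n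
   (no directed cycles, so paths have < n edges) it never runs out. *)
Fixpoint forE (n : nat) (E : seq (Sig * 'I_n * 'I_n)) (k : nat) (w : 'I_n) : form :=
  match k with
  | 0 => Var w
  | k'.+1 => bigconj (Var w :: [seq Dia e.1.1 (forE E k' e.2) | e <- E & e.1.2 == w])
  end.

Definition for_model (n : nat) (E : seq (Sig * 'I_n * 'I_n)) (r : 'I_n) : form :=
  forE E n r.

Definition iota' (pi : profile) : impl :=
  Impl (for_model (pE pi) (proot pi))
       (for_model (rcons (pE pi) (pS pi, pu pi, pv pi)) (proot pi)).

Definition Sigma' (Pi : profile -> Prop) : impl -> Prop :=
  fun i => exists pi, Pi pi /\ i = iota' pi.

End SPI.

(* Main.v *)
Require Import Defs.
From mathcomp Require Import all_boot zify.
From Stdlib Require Import Lia.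
From Stdlib Require List.
From Stdlib Require Import ClassicalEpsilon Classical_Prop FunctionalExtensionality PropExtensionality.
Set Implicit Arguments.
Unset Strict Implicit.
Unset Printing Implicit Defensive.

Lemma In_map_seq (T U : Type) (f : T -> U) (x : T) (l : seq T) :
  List.In x l -> List.In (f x) (map f l).
Proof. elim: l => //= y l IH [->|H]; [left|right; apply: IH]; done. Qed.

Lemma In_map_inv (T U : Type) (f : T -> U) (z : U) (l : seq T) :
  List.In z (map f l) -> exists x, List.In x l /\ z = f x.
Proof.
elim: l => //= y l IH [<-|H]; first by exists y; split; [left|].
by case: (IH H) => x [Hx ->]; exists x; split; [right|].
Qed.

Lemma In_filter_seq (T : Type) (p : pred T) (x : T) (l : seq T) :
  List.In x l -> p x -> List.In x (filter p l).
Proof.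
elim: l => //= y l IH [<-|H] px; first by rewrite px; left.
by case: (p y); [right|]; apply: IH.
Qed.

Lemma In_filter_inv (T : Type) (p : pred T) (x : T) (l : seq T) :
  List.In x (filter p l) -> List.In x l /\ p x.
Proof.
elim: l => //= y l IH; case py: (p y) => /=.
  by case=> [<-|H]; [split; [left|]|case: (IH H) => H1 H2; split; [right|]].
by move=> H; case: (IH H) => H1 H2; split; [right|].
Qed.

Lemma In_cat_seq (T : Type) (x : T) (l1 l2 : seq T) :
  List.In x (l1 ++ l2) <-> List.In x l1 \/ List.In x l2.
Proof.
elim: l1 => /= [|y l IH]; first by split; [right|case].
split; first by case=> [<-|/IH [H|H]]; [left; left|left; right|right].
by case=> [[<-|H]|H]; [left|right; apply/IH; left|right; apply/IH; right].
Qed.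

Lemma In_rcons_seq (T : Type) (x y : T) (l : seq T) :
  List.In x (rcons l y) <-> List.In x l \/ x = y.
Proof.
rewrite -cats1 In_cat_seq /=; split; first by case=> [H|[H|[]]]; [left|right].
by case=> [H|->]; [left|right; left].
Qed.

Lemma In_mem (T : eqType) (x : T) (l : seq T) : List.In x l -> x \in l.
Proof. elim: l => //= y l IH [->|H]; rewrite in_cons ?eqxx // IH ?orbT //. Qed.

Lemma mem_In (T : eqType) (x : T) (l : seq T) : x \in l -> List.In x l.
Proof. elim: l => //= y l IH; rewrite in_cons => /orP [/eqP ->|H]; [left|right; apply: IH]; done. Qed.

Lemma uniq_snd_inj (A : Type) (l : seq (A * nat)) (e1 e2 : A * nat) :
  uniq (map snd l) -> List.In e1 l -> List.In e2 l -> e1.2 = e2.2 -> e1 = e2.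
Proof.
elim: l => //= e l IH /andP [Hn Hu] [<-|H1] [<-|H2] // E.
- by move: Hn; rewrite E (In_mem (In_map_seq snd H2)).
- by move: Hn; rewrite -E (In_mem (In_map_seq snd H1)).
- exact: IH.
Qed.

Section SLOorder.
Variable Sig : Type.
Variable A : SLO Sig.
Implicit Types x y z : A.

Lemma sle_refl x : sle x x. Proof. exact: meetxx. Qed.
Lemma sle_trans y x z : sle x y -> sle y z -> sle x z.
Proof. rewrite /sle => H1 H2; by rewrite -{1}H1 -meetA H2 H1. Qed.
Lemma sle_meetl x y : sle (meet x y) x.
Proof. by rewrite /sle meetC meetA meetxx. Qed.
Lemma sle_meetr x y : sle (meet x y) y.
Proof. by rewrite /sle -meetA meetxx. Qed.
Lemma sle_glb z x y : sle z x -> sle z y -> sle z (meet x y).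
Proof. rewrite /sle => H1 H2; by rewrite meetA H1 H2. Qed.
Lemma sle_top x : sle x (top A). Proof. exact: meetxT. Qed.
Lemma sle_dia R x y : sle x y -> sle (dia R x) (dia R y).
Proof. exact: dia_mono. Qed.
Lemma sle_meet x x' y y' : sle x x' -> sle y y' -> sle (meet x y) (meet x' y').
Proof.
move=> H1 H2; apply: sle_glb.
  exact: sle_trans (sle_meetl _ _) H1.
exact: sle_trans (sle_meetr _ _) H2.
Qed.
Lemma meetTx x : meet (top A) x = x. Proof. by rewrite meetC meetxT. Qed.
End SLOorder.

Section Syn.
Variable Sig : Type.
Local Notation form := (form Sig).

Fixpoint sz (f : form) : nat :=
  match f with And p q => sz p + sz q | Dia _ p => (sz p).+1 | _ => 0 end.

Fixpoint edg (f : form) (b cur : nat) : seq (Sig * nat * nat) :=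
  match f with
  | And p q => edg p b cur ++ edg q (b + sz p) cur
  | Dia R p => (R, cur, b) :: edg p b.+1 b
  | _ => [::]
  end.

Fixpoint atm (f : form) (b cur : nat) : seq (nat * nat) :=
  match f with
  | Var p => [:: (cur, p)]
  | And p q => atm p b cur ++ atm q (b + sz p) cur
  | Dia R p => atm p b.+1 b
  | Top => [::]
  end.

Fixpoint bod (f : form) (b v : nat) : form :=
  match f with
  | And p q => if v < b + sz p then bod p b v else bod q (b + sz p) v
  | Dia R p => if v == b then p else bod p b.+1 v
  | _ => Top Sig
  end.

Fixpoint labs (f : form) : seq Sig :=
  match f with And p q => labs p ++ labs q | Dia R p => R :: labs p | _ => [::] end.

Definition outr f b cur := (cur < b) || (b + sz f <= cur).

Lemma edg_range f b cur e : List.In e (edg f b cur) ->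
  b <= e.2 < b + sz f /\ (e.1.2 = cur \/ (b <= e.1.2 /\ e.1.2 < e.2)).
Proof.
elim: f b cur => //= [p IHp q IHq|R p IHp] b cur.
  move/In_cat_seq => [/IHp|/IHq] [H1 H2]; split; try lia; case: H2; auto; move=> ?; right; lia.
case=> [<-|/IHp [H1 H2]] /=; first by split; [lia|left].
split; first lia. right; case: H2 => [->|]; lia.
Qed.

Lemma atm_range f b cur x p : List.In (x, p) (atm f b cur) ->
  x = cur \/ b <= x < b + sz f.
Proof.
elim: f b cur => //= [q|p1 IHp q IHq|R p1 IHp] b cur.
- by case=> // [[->]]; left.
- move/In_cat_seq => [/IHp|/IHq] [->|H]; auto; right; lia.
- move/IHp => [->|H]; right; lia.
Qed.

Lemma bod_range f b v : b <= v < b + sz f -> v + (sz (bod f b v)).+1 <= b + sz f.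
Proof.
elim: f b => [q| |p IHp q IHq|R p IHp] b /= H; try lia.
- case: ifP => H1; first by have := IHp b ltac:(lia); lia.
  have := IHq (b + sz p) ltac:(lia); lia.
- case: eqP => [->|H1]; first lia.
  have := IHp b.+1 ltac:(lia); lia.
Qed.

Lemma edg_sub f b cur R x y : List.In (R, x, y) (edg f b cur) -> x <> cur ->
  y + (sz (bod f b y)).+1 <= x + (sz (bod f b x)).+1.
Proof.
elim: f b cur => //= [p IHp q IHq|R' p IHp] b cur.
- move=> /In_cat_seq [H|H] Hx.
  + have [H3 H4] := edg_range H; simpl in *.
    rewrite (_ : y < b + sz p = true); last lia.
    rewrite (_ : x < b + sz p = true); last lia.
    exact: IHp H Hx.
  + have [H3 H4] := edg_range H; simpl in *.
    rewrite (_ : y < b + sz p = false); last lia.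
    rewrite (_ : x < b + sz p = false); last (case: H4; lia).
    exact: IHq H Hx.
- case=> [[_ ->] //|H] Hx.
  have [H3 H4] := edg_range H; simpl in *.
  rewrite (_ : y == b = false); last lia.
  case: (eqVneq x b) => [->|Hxb].
    have := bod_range (f:=p) (b:=b.+1) (v:=y) ltac:(lia). lia.
  exact: IHp H (elimN eqP Hxb).
Qed.

Lemma edg_snd f b cur : map snd (edg f b cur) = iota b (sz f).
Proof.
elim: f b cur => //= [p IHp q IHq|R p IHp] b cur.
  by rewrite map_cat IHp IHq iotaD.
by rewrite IHp.
Qed.

End Syn.

Section BodLemmas.
Variable Sig : Type.
Local Notation form := (form Sig).
Lemma bod_andl (p q : form) b v : v < b + sz p -> bod (And p q) b v = bod p b v.
Proof. by move=> /= ->. Qed.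
Lemma bod_andr (p q : form) b v : b + sz p <= v -> bod (And p q) b v = bod q (b + sz p) v.
Proof. by move=> /= H; rewrite ifN // -leqNgt. Qed.
Lemma bod_diae R (p : form) b : bod (Dia R p) b b = p.
Proof. by rewrite /= eqxx. Qed.
Lemma bod_dian R (p : form) b v : v != b -> bod (Dia R p) b v = bod p b.+1 v.
Proof. by move=> /= /negbTE ->. Qed.
End BodLemmas.

Section SynSLO.
Variable Sig : Type.
Variable A : SLO Sig.
Variable a : nat -> A.
Local Notation form := (form Sig).

Fixpoint E (c : nat -> A) (f : form) (b : nat) : A :=
  match f with
  | Var p => a p
  | Top => top A
  | And p q => meet (E c p b) (E c q (b + sz p))
  | Dia R p => dia R (meet (c b) (E c p b.+1))
  end.

Definition Nl c f b v := meet (c v) (E c (bod f b v) v.+1).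

Lemma E_top f b : E (fun _ => top A) f b = eval a f.
Proof. elim: f b => //= [p IHp q IHq|R p IHp] b; by rewrite ?IHp ?IHq ?meetTx. Qed.

Lemma E_loc c c' f b : (forall i, b <= i < b + sz f -> c i = c' i) -> E c f b = E c' f b.
Proof.
elim: f b => //= [p IHp q IHq|R p IHp] b H.
- rewrite (IHp b) ?(IHq (b + sz p)) // => i Hi; apply: H; lia.
- rewrite (H b) ?(IHp b.+1) //; try lia. move=> i Hi; apply: H; lia.
Qed.

Lemma Nl_loc c c' f b v : (forall i, v <= i < v + (sz (bod f b v)).+1 -> c i = c' i) ->
  Nl c f b v = Nl c' f b v.
Proof.
move=> H; rewrite /Nl (H v) ?(E_loc (c:=c) (c':=c')) //; try lia.
move=> i Hi; apply: H; lia.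
Qed.

Lemma Nl_andl c p q b v : v < b + sz p -> Nl c (And p q) b v = Nl c p b v.
Proof. by move=> H; rewrite /Nl bod_andl. Qed.
Lemma Nl_andr c p q b v : b + sz p <= v -> Nl c (And p q) b v = Nl c q (b + sz p) v.
Proof. by move=> H; rewrite /Nl bod_andr. Qed.
Lemma Nl_diae c R p b : Nl c (Dia R p) b b = meet (c b) (E c p b.+1).
Proof. by rewrite /Nl bod_diae. Qed.
Lemma Nl_dian c R p b v : v != b -> Nl c (Dia R p) b v = Nl c p b.+1 v.
Proof. by move=> H; rewrite /Nl bod_dian. Qed.

Lemma edg_cur c f b cur R y : outr f b cur -> List.In (R, cur, y) (edg f b cur) ->
  sle (E c f b) (dia R (Nl c f b y)).
Proof.
rewrite /outr; elim: f b cur => //= [p IHp q IHq|R' p IHp] b cur Ho.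
- move/In_cat_seq => [H|H]; have [H1 H2] := edg_range H; simpl in *.
  + rewrite Nl_andl; last lia.
    apply: sle_trans (sle_meetl _ _) (IHp _ _ _ H); lia.
  + rewrite Nl_andr; last lia.
    apply: sle_trans (sle_meetr _ _) (IHq _ _ _ H); lia.
- case=> [[-> <-]|H]; first by rewrite Nl_diae; apply: sle_refl.
  have [H1 H2] := edg_range H; simpl in *; lia.
Qed.

Lemma edg_ncur c f b cur R x y : outr f b cur -> List.In (R, x, y) (edg f b cur) -> x <> cur ->
  sle (Nl c f b x) (dia R (Nl c f b y)).
Proof.
rewrite /outr; elim: f b cur => //= [p IHp q IHq|R' p IHp] b cur Ho.
- move/In_cat_seq => [H|H] Hx; have [H1 H2] := edg_range H; simpl in *.
  + rewrite !Nl_andl; try lia. apply: (IHp _ _ _ H); lia.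
  + rewrite !Nl_andr; try lia. apply: (IHq _ _ _ H); lia.
- case=> [[_ -> _] //|H] Hx; have [H1 H2] := edg_range H; simpl in *.
  rewrite [Nl _ _ _ y]Nl_dian; last lia.
  case: (eqVneq x b) H => [-> H|Hxb H].
    rewrite Nl_diae; apply: sle_trans (sle_meetr _ _) (edg_cur _ _ H); rewrite /outr; lia.
  rewrite Nl_dian //; apply: (IHp _ _ _ H); [lia|by apply/eqP].
Qed.

Lemma atm_cur c f b cur p : outr f b cur -> List.In (cur, p) (atm f b cur) ->
  sle (E c f b) (a p).
Proof.
rewrite /outr; elim: f b cur => //= [q|p1 IHp q IHq|R' p1 IHp] b cur Ho.
- by case=> // [[->]]; apply: sle_refl.
- move/In_cat_seq => [H|H].
  + apply: sle_trans (sle_meetl _ _) (IHp _ _ _ H); lia.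
  + apply: sle_trans (sle_meetr _ _) (IHq _ _ _ H); lia.
- move=> H; have := atm_range H; lia.
Qed.

Lemma atm_ncur c f b cur x p : outr f b cur -> List.In (x, p) (atm f b cur) -> x <> cur ->
  sle (Nl c f b x) (a p).
Proof.
rewrite /outr; elim: f b cur => //= [q|p1 IHp q IHq|R' p1 IHp] b cur Ho.
- by case=> // [[-> _]].
- move/In_cat_seq => [H|H] Hx; have := atm_range H => H1.
  + rewrite Nl_andl; last lia. apply: (IHp _ _ _ H); lia.
  + rewrite Nl_andr; last lia. apply: (IHq _ _ _ H); lia.
- move=> H Hx; have := atm_range H => H1.
  case: (eqVneq x b) H => [-> H|Hxb H].
    rewrite Nl_diae; apply: sle_trans (sle_meetr _ _) (atm_cur _ _ H); rewrite /outr; lia.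
  rewrite Nl_dian //; apply: (IHp _ _ _ H); [lia|by apply/eqP].
Qed.

Lemma repl_cur c c' k f b cur R y : outr f b cur -> List.In (R, cur, y) (edg f b cur) ->
  (forall i, i <> k -> c i = c' i) -> y <= k < y + (sz (bod f b y)).+1 ->
  sle (meet (E c f b) (dia R (Nl c' f b y))) (E c' f b).
Proof.
rewrite /outr; elim: f b cur => //= [p IHp q IHq|R' p IHp] b cur Ho.
- move/In_cat_seq => [H|H] Hc; have [H1 H2] := edg_range H; simpl in *.
  + rewrite Nl_andl; try lia. move=> Hk.
    rewrite (_ : (y < b + sz p) = true) in Hk; last lia.
    have Hb := bod_range (f:=p) (b:=b) (v:=y) ltac:(lia).
    rewrite -(E_loc (c:=c) (c':=c') (f:=q)); last by move=> i Hi; apply: Hc; lia.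
    apply: sle_glb; last exact: sle_trans (sle_meetl _ _) (sle_meetr _ _).
    apply: sle_trans (sle_meet (sle_meetl _ _) (sle_refl _)) (IHp _ _ _ H Hc Hk); lia.
  + rewrite Nl_andr; try lia. move=> Hk.
    rewrite (_ : (y < b + sz p) = false) in Hk; last lia.
    rewrite -(E_loc (c:=c) (c':=c') (f:=p)); last by move=> i Hi; apply: Hc; lia.
    apply: sle_glb; first exact: sle_trans (sle_meetl _ _) (sle_meetl _ _).
    apply: sle_trans (sle_meet (sle_meetr _ _) (sle_refl _)) (IHq _ _ _ H Hc Hk); lia.
- case=> [[-> <-]|H]; first by rewrite Nl_diae => _ _; apply: sle_meetr.
  have [H1 H2] := edg_range H; simpl in *; lia.
Qed.

Lemma repl_ncur c c' k f b cur R x y : outr f b cur -> List.In (R, x, y) (edg f b cur) ->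
  x <> cur -> (forall i, i <> k -> c i = c' i) -> y <= k < y + (sz (bod f b y)).+1 ->
  sle (meet (Nl c f b x) (dia R (Nl c' f b y))) (Nl c' f b x).
Proof.
rewrite /outr; elim: f b cur => //= [p IHp q IHq|R' p IHp] b cur Ho.
- move/In_cat_seq => [H|H] Hx Hc; have [H1 H2] := edg_range H; simpl in *.
  + rewrite !Nl_andl; try lia. move=> Hk.
    rewrite (_ : (y < b + sz p) = true) in Hk; last lia.
    apply: (IHp _ _ _ H Hx Hc Hk); lia.
  + rewrite !Nl_andr; try lia. move=> Hk.
    rewrite (_ : (y < b + sz p) = false) in Hk; last lia.
    apply: (IHq _ _ _ H Hx Hc Hk); lia.
- case=> [[_ -> _] //|H] Hx Hc; have [H1 H2] := edg_range H; simpl in *.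
  rewrite [Nl _ _ _ y]Nl_dian; try lia. move=> Hk.
  rewrite (_ : (y == b) = false) in Hk; last lia.
  case: (eqVneq x b) H => [-> H|Hxb H].
    rewrite !Nl_diae; rewrite -(Hc b); last lia.
    apply: sle_glb; first exact: sle_trans (sle_meetl _ _) (sle_meetl _ _).
    apply: sle_trans (sle_meet (sle_meetr _ _) (sle_refl _)) (repl_cur _ H Hc Hk); rewrite /outr; lia.
  rewrite !Nl_dian //; apply: (IHp _ _ _ H _ Hc Hk); try lia; by apply/eqP.
Qed.

Lemma upE c c' k f b y : b <= y < b + sz f -> y <= k < y + (sz (bod f b y)).+1 ->
  (forall i, i <> k -> c i = c' i) -> sle (Nl c f b y) (Nl c' f b y) ->
  sle (E c f b) (E c' f b).
Proof.
elim: f b => [q| |p IHp q IHq|R p IHp] b /= Hy; try lia.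
- case: (ltnP y (b + sz p)) => Hl.
  + rewrite !Nl_andl ?bod_andl // => Hk Hc HN.
    have Hb := bod_range (f:=p) (b:=b) (v:=y) ltac:(lia).
    rewrite -(E_loc (c:=c) (c':=c') (f:=q)); last by move=> i Hi; apply: Hc; lia.
    apply: sle_meet (IHp _ _ Hk Hc HN) (sle_refl _); lia.
  + rewrite !Nl_andr ?bod_andr // => Hk Hc HN.
    rewrite -(E_loc (c:=c) (c':=c') (f:=p)); last by move=> i Hi; apply: Hc; lia.
    apply: sle_meet (sle_refl _) (IHq _ _ Hk Hc HN); lia.
- case: (eqVneq y b) => [->|Hyb].
    by rewrite !Nl_diae => _ _ HN; apply: sle_dia.
  rewrite !Nl_dian ?bod_dian // => Hk Hc HN.
  rewrite -(Hc b); last lia.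
  apply: sle_dia; apply: sle_meet (sle_refl _) (IHp _ _ Hk Hc HN); lia.
Qed.

End SynSLO.

Section Gen.
Variable Sig : Type.
Local Notation form := (form Sig).

Lemma sat_mono (W : Type) (F F' : Defs.frel Sig W) V (f : form) w :
  (forall R x y, F R x y -> F' R x y) -> sat F V f w -> sat F' V f w.
Proof.
move=> HF; elim: f w => //= [p IHp q IHq|R p IHp] w.
  by case=> H1 H2; split; [apply: IHp|apply: IHq].
by case=> v [H1 H2]; exists v; split; [apply: HF|apply: IHp].
Qed.

Lemma sat_bigconj (W : Type) (F : Defs.frel Sig W) V (l : seq form) w :
  sat F V (bigconj l) w <-> (forall f, List.In f l -> sat F V f w).
Proof.
elim: l => [|f l IH] /=; first by split.
case: l IH => [|g l] IH.
  by split; [move=> H f' [<-|[]]|move=> H; apply: H; left].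
split.
  by case=> H1 /IH H2 f' [<-|H]; [|apply: H2].
by move=> H; split; [apply: H; left|apply/IH => f' Hf; apply: H; right].
Qed.

Lemma eval_bigconj (A : SLO Sig) (a : nat -> A) (l : seq form) f :
  List.In f l -> sle (eval a (bigconj l)) (eval a f).
Proof.
elim: l => [|g l IH] //=; case: l IH => [|h l] IH.
  by case=> // <-; apply: sle_refl.
case=> [<-|H]; first exact: sle_meetl.
exact: sle_trans (sle_meetr _ _) (IH H).
Qed.

Lemma labelling (A : SLO Sig) (a : nat -> A) (W : Type) (F : Defs.frel Sig W) V (l : W -> A) (f : form) :
  (forall p x, V p x -> sle (l x) (a p)) ->
  (forall R x y, List.In R (labs f) -> F R x y -> sle (l x) (dia R (l y))) ->
  forall w, sat F V f w -> sle (l w) (eval a f).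
Proof.
move=> HV; elim: f => /= [p| |p IHp q IHq|R p IHp] HF w.
- exact: HV.
- by move=> _; apply: sle_top.
- case=> H1 H2; apply: sle_glb.
    by apply: IHp H1 => R x y HR; apply: HF; apply/In_cat_seq; left.
  by apply: IHq H2 => R x y HR; apply: HF; apply/In_cat_seq; right.
- case=> v [H1 H2]; apply: sle_trans (HF _ _ _ (or_introl erefl) H1) _.
  apply: sle_dia; apply: IHp H2 => R' x y HR; apply: HF; by right.
Qed.

Section ForE.
Variable n : nat.
Variable E : seq (Sig * 'I_n * 'I_n).

Lemma forE_S k w : Defs.forE E k.+1 w =
  bigconj (Var Sig w :: [seq Dia e.1.1 (Defs.forE E k e.2) | e <- E & e.1.2 == w]).
Proof. by []. Qed.

Lemma forE_var_sat (W : Type) (F : Defs.frel Sig W) V k x w :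
  sat F V (Defs.forE E k x) w -> V x w.
Proof.
case: k => [//|k]; rewrite forE_S => /sat_bigconj H; apply: (H (Var Sig x)); by left.
Qed.

Lemma forE_var_eval (A : SLO Sig) (b : nat -> A) k x :
  sle (eval b (Defs.forE E k x)) (b x).
Proof.
case: k => [|k]; first exact: sle_refl.
rewrite forE_S; apply: (eval_bigconj b (f := Var Sig x)); by left.
Qed.

Lemma In_forE_dia R x y k : List.In (R, x, y) E ->
  List.In (Dia R (Defs.forE E k y))
    [seq Dia e.1.1 (Defs.forE E k e.2) | e <- E & e.1.2 == x].
Proof.
move=> H; apply: (In_map_seq (fun e : Sig * 'I_n * 'I_n => Dia e.1.1 (Defs.forE E k e.2)) (x := (R, x, y))).
by apply: In_filter_seq => //=.
Qed.

Lemma forE_dia_sat (W : Type) (F : Defs.frel Sig W) V R x y k w : List.In (R, x, y) E ->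
  sat F V (Defs.forE E k.+1 x) w -> exists v, F R w v /\ sat F V (Defs.forE E k y) v.
Proof.
move=> HE; rewrite forE_S => /sat_bigconj H.
exact: (H (Dia R (Defs.forE E k y))) (or_intror (In_forE_dia k HE)).
Qed.

Lemma forE_dia_eval (A : SLO Sig) (b : nat -> A) R x y k : List.In (R, x, y) E ->
  sle (eval b (Defs.forE E k.+1 x)) (dia R (eval b (Defs.forE E k y))).
Proof.
move=> HE; rewrite forE_S.
change (dia R (eval b (Defs.forE E k y))) with (eval b (Dia R (Defs.forE E k y))).
apply: (eval_bigconj b); right; exact: In_forE_dia.
Qed.

Lemma hom_sat (W : Type) (F : Defs.frel Sig W) V (h : 'I_n -> W) :
  (forall R x y, List.In (R, x, y) E -> F R (h x) (h y)) ->
  (forall x, V (nat_of_ord x) (h x)) ->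
  forall k x, sat F V (Defs.forE E k x) (h x).
Proof.
move=> Hh HV; elim=> [|k IH] x; first exact: HV.
rewrite forE_S; apply/sat_bigconj => f [<-|]; first exact: HV.
move=> Hf; have [[[R x'] y] [H1 H2]] := In_map_inv Hf; subst f.
have [HE /= /eqP Hx] := In_filter_inv H1.
by subst x'; exists (h y); split; [apply: Hh|apply: IH].
Qed.
End ForE.
End Gen.

Section Tree.
Variable Sig : Type.
Hypothesis hSig : inhabited Sig.
Variable n : nat.
Variable F : Defs.frel Sig 'I_n.
Variable r : 'I_n.
Hypothesis HT : is_tree_rooted_at F r.

Definition par (y : 'I_n) : 'I_n := epsilon (inhabits r) (fun x => edge F x y).
Definition lab (y : 'I_n) : Sig := epsilon hSig (fun R => F R (par y) y).

Lemma noedge_r x : ~ edge F x r.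
Proof. by case: HT. Qed.

Lemma par_spec y : y <> r -> edge F (par y) y.
Proof.
case: HT => _ H _ _ Hy; have [x [Hx _]] := H y Hy.
by apply: (epsilon_spec (inhabits r) (fun x => edge F x y)); exists x.
Qed.

Lemma par_uniq x y : edge F x y -> par y = x.
Proof.
move=> Hxy; have Hy : y <> r by move=> E; apply: (noedge_r (x := x)); rewrite -E.
case: HT => _ H _ _; have [z [_ Hz]] := H y Hy.
by rewrite -(Hz _ Hxy) -(Hz _ (par_spec Hy)).
Qed.

Lemma lab_spec y : y <> r -> F (lab y) (par y) y.
Proof.
move=> Hy; have [R HR] := par_spec Hy.
by apply: (epsilon_spec hSig (fun R => F R (par y) y)); exists R.
Qed.

Lemma lab_uniq R x y : F R x y -> [/\ y <> r, x = par y & R = lab y].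
Proof.
move=> H; have Hxy : edge F x y by exists R.
have Hy : y <> r by move=> E; apply: (noedge_r (x := x)); rewrite -E.
have Hp := par_uniq Hxy; subst x; split => //.
case: HT => _ _ _ Hd; exact: Hd _ _ _ _ H (lab_spec Hy).
Qed.

Lemma reach_iter x z : tclos (edge F) x z -> forall k, iter k par x = r -> exists k', iter k' par z = r.
Proof.
elim=> [x' y Hxy|x' y z' Hxy _ IH] k Hk.
  by exists k.+1; rewrite iterSr (par_uniq Hxy).
apply: (IH k.+1); by rewrite iterSr (par_uniq Hxy).
Qed.

Lemma ex_depth y : exists k, iter k par y == r.
Proof.
case: HT => _ _ H _; case: (H y) => [<-|Hr]; first by exists 0.
by have [k Hk] := reach_iter Hr (k := 0) erefl; exists k; apply/eqP.
Qed.

Definition dep y := ex_minn (ex_depth y).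

Lemma dep_spec y : iter (dep y) par y = r.
Proof. rewrite /dep; case: ex_minnP => k /eqP //. Qed.

Lemma dep_min y k : iter k par y = r -> dep y <= k.
Proof. rewrite /dep; case: ex_minnP => k' _ H Hk; apply: H; exact/eqP. Qed.

Lemma dep_r : dep r = 0.
Proof. by apply/eqP; rewrite -leqn0; apply: dep_min. Qed.

Lemma dep0 y : dep y = 0 -> y = r.
Proof. by move=> H; have := dep_spec y; rewrite H. Qed.

Lemma dep_par y : y <> r -> dep y = (dep (par y)).+1.
Proof.
move=> Hy; have H0 : 0 < dep y by rewrite lt0n; apply/eqP => /dep0.
have H1 := dep_spec y; rewrite -(prednK H0) iterSr in H1.
have H2 := dep_min H1.
have H3 : dep y <= (dep (par y)).+1 by apply: dep_min; rewrite iterSr dep_spec.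
lia.
Qed.

Lemma dep_lt y : dep y < n.
Proof.
set s := [seq iter i par y | i <- iota 0 (dep y).+1].
have Hu : uniq s.
  rewrite map_inj_in_uniq ?iota_uniq // => i j; rewrite !mem_iota /= !add0n !ltnS => Hi Hj Hij.
  wlog Hlt : i j Hi Hj Hij / i < j.
    move=> Hw; case: (ltngtP i j) => [H|H|//]; first exact: Hw.
    by symmetry; apply: Hw.
  have : iter (dep y - j + i) par y = r.
    by rewrite iterD Hij -iterD subnK // dep_spec.
  move/dep_min; lia.
have := max_card (mem s); rewrite card_ord (card_uniqP Hu) size_map size_iota; done.
Qed.

End Tree.

Section LemmaA.
Variable Sig : Type.
Hypothesis hSig : inhabited Sig.
Variable pi : profile Sig.
Hypothesis Hpi : fl_tree_profile pi.
Local Notation n := (pn pi).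
Local Notation E := (pE pi).
Local Notation r := (proot pi).
Local Notation Fp := (@pframe _ pi).

Let HT : is_tree_rooted_at Fp r. Proof. by case: Hpi. Qed.
Local Notation par := (par Fp r).
Local Notation lab := (lab hSig Fp r).
Local Notation dep := (dep HT).

Variables (W : Type) (F : Defs.frel Sig W) (V : nat -> W -> Prop) (w : W).
Hypothesis Hw : sat F V (Defs.forE E n r) w.

Definition pick (x : 'I_n) (a : W) : W :=
  epsilon (inhabits a) (fun v => F (lab x) a v /\ sat F V (Defs.forE E (n - dep x) x) v).

Fixpoint H (j : nat) : 'I_n -> W :=
  match j with
  | 0 => fun _ => w
  | j'.+1 => fun x => if dep x == j'.+1 then pick x (H j' (par x)) else H j' x
  end.

Lemma H_stable j x : dep x <= j -> H j.+1 x = H j x.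
Proof. move=> Hx /=; rewrite ifN //; apply/eqP; lia. Qed.

Lemma H_mono j j' x : dep x <= j -> j <= j' -> H j' x = H j x.
Proof.
move=> Hx; elim: j' => [|j' IH] Hj; first by have -> : j = 0 by lia.
case: (eqVneq j j'.+1) => [-> //|Hne].
rewrite H_stable ?IH //; lia.
Qed.

Lemma H_inv j x : dep x <= j ->
  sat F V (Defs.forE E (n - dep x) x) (H j x) /\ (x <> r -> F (lab x) (H j (par x)) (H j x)).
Proof.
elim: j x => [|j IH] x Hx.
  have Hr : x = r by apply: (dep0 (HT:=HT)); lia.
  subst x; rewrite (dep_r HT) subn0; split => //.
case: (eqVneq (dep x) j.+1) => Hd.
- have Hxr : x <> r by move=> E'; move: Hd; rewrite E' (dep_r HT).
  have Hp := dep_par HT Hxr; rewrite Hd in Hp; case: Hp => Hp.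
  have [IH1 _] := IH (par x) ltac:(lia).
  have Hlt := dep_lt HT x.
  have Hn : n - dep (par x) = (n - dep x).+1 by lia.
  rewrite Hn in IH1.
  have HE : List.In (lab x, par x, x) E by apply: (lab_spec hSig HT Hxr).
  have [v Hv] := forE_dia_sat HE IH1.
  have Hpk : F (lab x) (H j (par x)) (pick x (H j (par x))) /\
             sat F V (Defs.forE E (n - dep x) x) (pick x (H j (par x))).
    by apply: (epsilon_spec (inhabits (H j (par x))) (fun v => F (lab x) (H j (par x)) v /\ sat F V (Defs.forE E (n - dep x) x) v)); exists v.
  rewrite (H_stable (x := par x)); last lia.
  rewrite /= Hd eqxx; rewrite Hd in Hpk.
  by case: Hpk => Hp1 Hp2; split.
- have Hx' : dep x <= j by lia.
  have [IH1 IH2] := IH x Hx'.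
  rewrite H_stable //; split => // Hxr.
  rewrite H_stable; first exact: IH2.
  have := dep_par HT Hxr; lia.
Qed.

Definition hA := H n.

Lemma hA_hom R (x y : 'I_n) : List.In (R, x, y) E -> F R (hA x) (hA y).
Proof.
move=> HE; have [Hy Hx HR] := lab_uniq hSig HT (HE : Fp R x y).
subst x R; have := dep_lt HT y => Hl.
by have [_ H2] := H_inv (j := n) (x := y) ltac:(lia); apply: H2.
Qed.

Lemma hA_val (x : 'I_n) : V x (hA x).
Proof.
have := dep_lt HT x => Hl.
have [H1 _] := H_inv (j := n) (x := x) ltac:(lia).
exact: forE_var_sat H1.
Qed.

Lemma hA_r : hA r = w.
Proof. rewrite /hA (H_mono (j := 0)) ?(dep_r HT) //. Qed.

End LemmaA.

Lemma lemmaA Sig (hSig : inhabited Sig) (pi : profile Sig) (Hpi : fl_tree_profile pi)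
  (W : Type) (F : Defs.frel Sig W) : sat_Phi F pi -> frame_valid F (iota' pi).
Proof.
move=> HPhi V w Hw.
set h := hA hSig Hpi F V w.
have Hhom : is_hom (@pframe _ pi) F h by move=> R x y; apply: hA_hom.
have HS := HPhi h Hhom.
rewrite /= /for_model -(hA_r hSig Hpi F V w).
apply: hom_sat; last exact: hA_val.
move=> R x y /In_rcons_seq [HE|[-> -> ->]] //; exact: hA_hom.
Qed.

Section TreeT.
Variable Sig : Type.
Variable s : form Sig.
Local Notation m := (sz s).+1.
Definition TE := edg s 1 0.
Definition TA := atm s 1 0.
Definition TF : Defs.frel Sig 'I_m := fun R x y => List.In (R, nat_of_ord x, nat_of_ord y) TE.
Definition TV : nat -> 'I_m -> Prop := fun p x => List.In (nat_of_ord x, p) TA.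

Lemma TE_range R x y : List.In (R, x, y) TE -> 1 <= y < m /\ (x = 0 \/ (1 <= x /\ x < y)).
Proof. move/edg_range => /= [H1 H2]; split; lia. Qed.

Lemma TF_lt R x y : TF R x y -> x < y.
Proof. move/TE_range; lia. Qed.

Lemma sat_T_gen f b (cur : 'I_m) :
  (forall e, List.In e (edg f b cur) -> List.In e TE) ->
  (forall e, List.In e (atm f b cur) -> List.In e TA) ->
  b + sz f <= m -> sat TF TV f cur.
Proof.
elim: f b cur => [p| |p IHp q IHq|R p IHp] b cur /= HE HA Hb //.
- by apply: HA; left.
- split.
    by apply: (IHp b) => [e He|e He|]; [apply: HE|apply: HA|lia]; apply/In_cat_seq; left.
  by apply: (IHq (b + sz p)) => [e He|e He|]; [apply: HE|apply: HA|lia]; apply/In_cat_seq; right.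
- have Hb' : b < m by lia.
  exists (Ordinal Hb'); split; first by apply: HE; left.
  apply: (IHp b.+1) => /= [e He|e He|]; [apply: HE; right|apply: HA|lia]; done.
Qed.

Lemma sat_T : sat TF TV s ord0.
Proof. by apply: (sat_T_gen (b := 1)). Qed.

Lemma reach_gen f b (cur : 'I_m) :
  (forall e, List.In e (edg f b cur) -> List.In e TE) -> b + sz f <= m ->
  forall v : 'I_m, b <= v < b + sz f -> tclos (edge TF) cur v.
Proof.
elim: f b cur => [p| |p IHp q IHq|R p IHp] b cur /= HE Hb v Hv; try lia.
- case: (ltnP v (b + sz p)) => Hvl.
    by apply: (IHp b) => [e He||]; [apply: HE; apply/In_cat_seq; left|lia|lia].
  by apply: (IHq (b + sz p)) => [e He||]; [apply: HE; apply/In_cat_seq; right|lia|lia].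
- have Hb' : b < m by lia.
  have He : edge TF cur (Ordinal Hb') by exists R; apply: HE; left.
  case: (eqVneq (nat_of_ord v) b) => Hvb.
    have -> : v = Ordinal Hb' by apply: val_inj.
    exact: tc_step.
  apply: tc_trans He _; apply: (IHp b.+1) => /= [e He'||]; [apply: HE; right|lia|lia]; done.
Qed.

Lemma TE_uniq e1 e2 : List.In e1 TE -> List.In e2 TE -> e1.2 = e2.2 -> e1 = e2.
Proof.
apply: (@uniq_snd_inj (Sig * nat)).
have Hs : map (@snd _ _) TE = iota 1 (sz s) := edg_snd s 1 0.
by rewrite Hs iota_uniq.
Qed.

Lemma tree_T : is_tree_rooted_at TF ord0.
Proof.
split.
- by move=> x [R /TE_range /=]; lia.
- move=> y Hy.
  have Hy0 : 0 < nat_of_ord y by case: y Hy => [[|y'] Hy'] //= H; case: H; apply: val_inj.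
  have : nat_of_ord y \in map snd TE.
    have Hs : map (@snd _ _) TE = iota 1 (sz s) := edg_snd s 1 0.
    rewrite Hs mem_iota.
    have := ltn_ord y; lia.
  move/mem_In => Hm; have [[[R x] y'] [HE /= Hyy]] := In_map_inv Hm; subst y'.
  have [H1 H2] := TE_range HE.
  have Hx : x < m by lia.
  exists (Ordinal Hx); split; first by exists R.
  move=> x' [R' HE']; apply: val_inj => /=.
  by have [] := TE_uniq HE HE' erefl.
- move=> y; case: (eqVneq y ord0) => [->|Hy]; first by left.
  right; apply: (reach_gen (f := s) (b := 1)) => //.
  have : nat_of_ord y != 0 by apply: contra Hy => /eqP H; apply/eqP/val_inj.
  have := ltn_ord y; lia.
- move=> R R' x y H1 H2; by have [] := TE_uniq H1 H2 erefl.
Qed.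

End TreeT.

Definition upd (T : Type) (c : nat -> T) (k : nat) (x : T) : nat -> T :=
  fun i => if i == k then x else c i.

Lemma upd_ne T (c : nat -> T) k x i : i <> k -> c i = upd c k x i.
Proof. by move=> H; rewrite /upd ifN //; apply/eqP. Qed.

Section Main.
Variable Sig : Type.
Hypothesis hSig : inhabited Sig.
Variable Pi : profile Sig -> Prop.
Hypothesis hPi : forall pi, Pi pi -> fl_tree_profile pi.
Variable R0 : Sig.
Variable s : form Sig.
Variable A : SLO Sig.
Variable a : nat -> A.
Hypothesis HA : forall s', Sigma' Pi s' -> slo_valid A s'.
Local Notation m := (sz s).+1.
Local Notation TF := (@TF _ s).
Local Notation TV := (@TV _ s).

Definition N (c : nat -> A) (v : nat) := Nl a c (Dia R0 s) 0 v.
Definition sub (v : nat) := v + (sz (bod (Dia R0 s) 0 v)).+1.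

Lemma outr0 : outr (Dia R0 s) 0 m.
Proof. by rewrite /outr /=; lia. Qed.

Lemma TE_in0 R x y : List.In (R, x, y) (TE s) -> List.In (R, x, y) (edg (Dia R0 s) 0 m).
Proof. by right. Qed.

Lemma N_edge c R (x y : 'I_m) : TF R x y -> sle (N c x) (dia R (N c y)).
Proof.
move=> H; apply: (edg_ncur a c outr0 (TE_in0 H)).
have := ltn_ord x; lia.
Qed.

Lemma N_atom c p (x : 'I_m) : TV p x -> sle (N c x) (a p).
Proof. move=> H; apply: (atm_ncur a c outr0 H); have := ltn_ord x; lia. Qed.

Lemma N_loc c c' v : (forall i, v <= i -> c i = c' i) -> N c v = N c' v.
Proof. by move=> H; apply: Nl_loc => i Hi; apply: H; lia. Qed.

Lemma N_top : N (fun _ => top A) 0 = eval a s.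
Proof. by rewrite /N Nl_diae E_top meetTx. Qed.

Lemma N_cle c v : sle (N c v) (c v).
Proof. exact: sle_meetl. Qed.

Lemma TF_sub R (x y : 'I_m) : TF R x y -> sub y <= sub x.
Proof.
move=> H; have := edg_sub (TE_in0 H); rewrite /sub => H'; apply: H'.
have := ltn_ord x; lia.
Qed.

Lemma N_repl c c' k R (x y : 'I_m) : TF R x y -> (forall i, i <> k -> c i = c' i) ->
  y <= k < sub y -> sle (meet (N c x) (dia R (N c' y))) (N c' x).
Proof.
move=> H Hc Hk; apply: (repl_ncur a outr0 (TE_in0 H) _ Hc Hk).
have := ltn_ord x; lia.
Qed.

Lemma N_up c c' k y : y < m -> y <= k < sub y -> (forall i, i <> k -> c i = c' i) ->
  sle (N c y) (N c' y) -> sle (N c 0) (N c' 0).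
Proof.
move=> Hy Hk Hc HN; case: (eqVneq y 0) Hk HN => [-> //|Hy0] Hk HN.
rewrite /N !Nl_diae -(Hc 0); last lia.
apply: sle_meet (sle_refl _) _.
apply: (upE (y := y) (k := k)) => //; first lia.
- by move: Hk; rewrite /sub bod_dian.
- by move: HN; rewrite /N !Nl_dian.
Qed.

Lemma step c pi (Hp : Pi pi) (h : 'I_(pn pi) -> 'I_m) (Hh : is_hom (@pframe _ pi) TF h) :
  sle (N c 0) (N (upd c (h (pu pi)) (meet (c (h (pu pi))) (dia (pS pi) (N c (h (pv pi)))))) 0).
Proof.
have Hfl := hPi Hp.
have HT : is_tree_rooted_at (@pframe _ pi) (proot pi) by case: Hfl.
set k := nat_of_ord (h (pu pi)).
set c' := upd c k _.
have Hc : forall i, i <> k -> c i = c' i by move=> i Hi; apply: upd_ne.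
set u := pu pi; set r := proot pi; set E := pE pi; set E' := rcons E (pS pi, pu pi, pv pi).
set par' := par (@pframe _ pi) r.
have Hdi : forall i, i <= dep HT u -> dep HT (iter i par' u) = dep HT u - i.
  elim=> [|i IH] Hi; first by rewrite subn0.
  rewrite iterS; set x1 := iter i _ u.
  have Hx1 : x1 <> r.
    by move=> E1; have := IH ltac:(lia); rewrite -/x1 E1 (dep_r HT); lia.
  have H1 := IH ltac:(lia); rewrite -/x1 in H1.
  have H2 := dep_par HT Hx1; rewrite -/par' in H2; lia.
have Hedge : forall i, i < dep HT u ->
    List.In (lab hSig (@pframe _ pi) r (iter i par' u), par' (iter i par' u), iter i par' u) E.
  move=> i Hi; apply: (lab_spec hSig HT) => E1.
  by have := Hdi i ltac:(lia); rewrite E1 (dep_r HT); lia.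
have Hsub : forall i, i <= dep HT u -> h (iter i par' u) <= k < sub (h (iter i par' u)).
  elim=> [|i IH] Hi /=; first by rewrite /sub /k /u; lia.
  have HE := Hh _ _ _ (Hedge i ltac:(lia)).
  have := TF_lt HE; have := TF_sub HE; have := IH ltac:(lia); lia.
set bv := fun p => N c (h (insubd u p)).
have Hbv : forall x, bv (nat_of_ord x) = N c (h x) by move=> x; rewrite /bv valKd.
have S1 : sle (N c (h r)) (eval bv (Defs.forE E (pn pi) r)).
  apply: (labelling (F := @pframe _ pi) (V := fun p x => p = nat_of_ord x) (l := fun x => N c (h x))).
  - by move=> p x ->; rewrite Hbv; apply: sle_refl.
  - by move=> R x y _ Hxy; apply: N_edge; apply: Hh.
  - exact: (hom_sat (h := id) (E := E)).
have S2 : sle (eval bv (Defs.forE E (pn pi) r)) (eval bv (Defs.forE E' (pn pi) r)).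
  exact: (HA (ex_intro _ pi (conj Hp erefl)) bv).
have S3 : forall i, i <= dep HT u -> forall j, i < j ->
    sle (eval bv (Defs.forE E' j (iter i par' u))) (N c' (h (iter i par' u))).
  elim=> [|i IH] Hi [|j] Hj //.
  - have T1 := forE_var_eval E' bv j.+1 u.
    have T2 := forE_dia_eval bv j (E := E') (R := pS pi) (x := u) (y := pv pi) (proj2 (In_rcons_seq _ _ _) (or_intror erefl)).
    have T3 := forE_var_eval E' bv j (pv pi).
    rewrite Hbv in T1; rewrite Hbv in T3.
    rewrite /N /Nl -/k /c' /upd eqxx -(@E_loc _ _ a c); last by move=> i Hi'; rewrite ifN //; apply/eqP; lia.
    apply: sle_glb; first apply: sle_glb.
    + exact: sle_trans T1 (sle_meetl _ _).
    + exact: sle_trans T2 (sle_dia _ T3).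
    + exact: sle_trans T1 (sle_meetr _ _).
  - rewrite iterS; set x1 := iter i par' u.
    have HE := Hedge i ltac:(lia).
    have HE' : List.In (lab hSig (@pframe _ pi) r x1, par' x1, x1) E' by apply/In_rcons_seq; left.
    have T1 := forE_var_eval E' bv j.+1 (par' x1).
    have T2 := forE_dia_eval bv j HE'.
    have T3 := IH ltac:(lia) j ltac:(lia).
    rewrite Hbv in T1.
    apply: sle_trans (N_repl (Hh _ _ _ HE) Hc (Hsub i ltac:(lia))).
    apply: sle_glb; first exact: T1.
    exact: sle_trans T2 (sle_dia _ T3).
have Hr : iter (dep HT u) par' u = r := dep_spec HT u.
have S4 := S3 (dep HT u) (leqnn _) (pn pi) (dep_lt HT u).
rewrite Hr in S4.
have Hs := Hsub (dep HT u) (leqnn _); rewrite Hr in Hs.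
apply: (N_up (y := h r) (k := k)) => //.
exact: sle_trans S1 (sle_trans S2 S4).
Qed.

End Main.

Section Threshold.
Variable Sig : Type.
Hypothesis hSig : inhabited Sig.
Variable Pi : profile Sig -> Prop.
Hypothesis hPi : forall pi, Pi pi -> fl_tree_profile pi.
Variable R0 : Sig.
Variable s t : form Sig.
Variable A : SLO Sig.
Variable a : nat -> A.
Hypothesis HA : forall s', Sigma' Pi s' -> slo_valid A s'.
Local Notation m := (sz s).+1.
Local Notation TF := (@TF _ s).
Local Notation N := (@N _ R0 s A a).

Definition Added R (x y : 'I_m) := exists pi, Pi pi /\ R = pS pi /\
  exists h, is_hom (@pframe _ pi) TF h /\ x = h (pu pi) /\ y = h (pv pi).

Lemma Added_lt R x y : Added R x y -> x < y.
Proof.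
case=> pi [Hp [_ [h [Hh [-> ->]]]]].
have [_ _ _ Huv] := hPi Hp.
elim: Huv => [x' y' [R' H]|x' y' z' [R' H] _ IH]; first exact: TF_lt (Hh _ _ _ H).
exact: ltn_trans (TF_lt (Hh _ _ _ H)) IH.
Qed.

Definition Pk k := exists c, sle (eval a s) (N c 0) /\
  forall R (x y : 'I_m), List.In R (labs t) -> Added R x y -> k <= x -> sle (c x) (dia R (N c y)).

Lemma P_all i : i <= m -> Pk (m - i).
Proof.
elim: i => [|i IH] Hi.
  exists (fun _ => top A); split; first by rewrite N_top; apply: sle_refl.
  by move=> R x y _ _ Hx; have := ltn_ord x; lia.
have Hk : m - i.+1 < m by lia.
set k := m - i.+1.
have [c [Hc0 Hc1]] := IH (ltnW Hi).
set kk : 'I_m := Ordinal Hk.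
have Q : forall L, exists c, sle (eval a s) (N c 0) /\
    (forall R (x y : 'I_m), List.In R (labs t) -> Added R x y -> k < x -> sle (c x) (dia R (N c y))) /\
    (forall R y, List.In (R, y) L -> List.In R (labs t) -> Added R kk y -> sle (c kk) (dia R (N c y))).
  elim=> [|[R y] L [c1 [H0 [H1 H2]]]].
    exists c; split => //; split => // R x y HR HA' Hx; apply: Hc1 => //; rewrite /k in Hx; lia.
  case: (classic (List.In R (labs t) /\ Added R kk y)) => [[HR HAd]|Hno]; last first.
    exists c1; split => //; split => // R' y' [[<- <-]|HL] HR' HA'; [by case: Hno|exact: H2].
  have Hky : kk < y := Added_lt HAd.
  case: HAd => pi [Hp [ER [h [Hh [Ek Ey]]]]].
  have Hst := step hSig hPi R0 a HA c1 Hp Hh.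
  rewrite -Ek -Ey -ER in Hst.
  set c' := upd c1 kk _ in Hst.
  have Hc' : forall i, i <> k -> c1 i = c' i by move=> i' Hi'; apply: upd_ne.
  have HN : forall y' : 'I_m, k < y' -> N c1 y' = N c' y'.
    by move=> y' Hy'; apply: N_loc => i' Hi'; apply: Hc'; lia.
  exists c'; split; first exact: sle_trans H0 Hst.
  split.
    move=> R' x y' HR' HA' Hx; have := Added_lt HA' => Hxy.
    rewrite -HN; last lia. rewrite -Hc'; last lia.
    exact: H1.
  move=> R' y' [[<- <-]|HL] HR' HA'.
    rewrite -HN // /c' /upd eqxx ER; exact: sle_meetr.
  have := Added_lt HA' => Hy'.
  rewrite -HN // /c' /upd eqxx.
  exact: sle_trans (sle_meetl _ _) (H2 _ _ HL HR' HA').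
have [c1 [H0 [H1 H2]]] := Q (List.list_prod (labs t) (enum 'I_m)).
exists c1; split => // R x y HR HA' Hx.
case: (ltnP k x) => Hkx; first exact: H1.
have Exk : x = kk by apply: val_inj => /=; rewrite /k in Hx Hkx *; lia.
subst x; apply: H2 => //.
have Hy : List.In y (enum 'I_m) by apply: mem_In; rewrite mem_enum.
exact: (@List.in_prod Sig 'I_m _ _ R y HR Hy).
Qed.

End Threshold.

Lemma closure_Phi Sig (Pi : profile Sig -> Prop) W (F : Defs.frel Sig W) pi :
  Pi pi -> sat_Phi (Defs.closure Pi F) pi.
Proof.
move=> Hp h Hh F' HF HP; apply: (HP pi Hp) => R x y Hxy.
exact: Hh _ _ _ Hxy F' HF HP.
Qed.

Lemma closure_ext Sig (Pi : profile Sig -> Prop) W (F : Defs.frel Sig W) R x y :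
  F R x y -> Defs.closure Pi F R x y.
Proof. by move=> H F' HF _; apply: HF. Qed.

Section PowSLO.
Variable Sig : Type.
Variable W : Type.
Variable F : Defs.frel Sig W.

Let pmeet (X Y : W -> Prop) : W -> Prop := fun w => X w /\ Y w.
Let ptop : W -> Prop := fun _ => True.
Let pdia (R : Sig) (X : W -> Prop) : W -> Prop := fun w => exists v, F R w v /\ X v.

Lemma pext (X Y : W -> Prop) : (forall w, X w <-> Y w) -> X = Y.
Proof.
move=> H; apply: functional_extensionality => w; apply: propositional_extensionality; exact: H.
Qed.

Definition PSLO : SLO Sig.
refine (@MkSLO Sig (W -> Prop) pmeet ptop pdia _ _ _ _ _).
- by move=> X Y Z; apply: pext => w; rewrite /pmeet; tauto.
- by move=> X Y; apply: pext => w; rewrite /pmeet; tauto.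
- by move=> X; apply: pext => w; rewrite /pmeet; tauto.
- by move=> X; apply: pext => w; rewrite /pmeet /ptop; tauto.
- move=> R X Y H; apply: pext => w; rewrite /pmeet /pdia; split; first by case.
  case=> v [H1 H2]; split; first by exists v.
  exists v; split => //; have := f_equal (fun Z => Z v) H; rewrite /pmeet /= => E.
  by rewrite -E in H2; case: H2.
Defined.

Lemma eval_PSLO (a : nat -> W -> Prop) (f : form Sig) w :
  @eval Sig PSLO a f w <-> sat F a f w.
Proof.
elim: f w => //= [p IHp q IHq|R p IHp] w.
  by rewrite /pmeet; split; case=> H1 H2; split; try apply/IHp; try apply/IHq.
rewrite /pdia; split; case=> v [H1 H2]; exists v; split => //; exact/IHp.
Qed.

Lemma slo_frame (i : impl Sig) : slo_valid PSLO i <-> frame_valid F i.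
Proof.
split.
  move=> H V w Hw; have := f_equal (fun Z => Z w) (H V); rewrite /= /pmeet => E.
  have : @eval Sig PSLO V (ante i) w by apply/eval_PSLO.
  rewrite -E; case=> _ /eval_PSLO; done.
move=> H V; apply: pext => w; rewrite /pmeet; split; first by case.
move=> Hw; split => //; apply/eval_PSLO; apply: H; exact/eval_PSLO.
Qed.
End PowSLO.

Unset Implicit Arguments.

Theorem theorem5p10 (Sig : Type) (hSig : inhabited Sig)
  (Pi : profile Sig -> Prop)
  (hPi : forall pi, Pi pi -> fl_tree_profile pi)
  (hstable : stable Pi) :
  complete (Sigma' Pi).
Proof.
case: (hSig) => R0.
move=> [s t]; split.
- move=> HK A HA a.
  set CF := Defs.closure Pi (@TF _ s).
  have Hval : forall s', Sigma' Pi s' -> frame_valid CF s'.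
    move=> s' [pi [Hp ->]]; apply: (lemmaA hSig (hPi _ Hp)); exact: closure_Phi.
  have Hs0 : sat CF (@TV _ s) s ord0.
    apply: sat_mono (sat_T s) => R x y H; exact: closure_ext.
  have Hsat := HK _ CF Hval (@TV _ s) ord0 Hs0.
  set F1 : Defs.frel Sig 'I_(sz s).+1 := fun R x y => @TF _ s R x y \/ Added Pi R x y.
  have HCF1 : forall R x y, CF R x y -> F1 R x y.
    move=> R x y H; apply: H; first by move=> *; left.
    move=> pi Hp g Hg.
    have Hg' : is_hom (@pframe _ pi) CF g.
      move=> R' x' y' /Hg [HT|HAd]; first exact: closure_ext.
      case: HAd => pi' [Hp' [-> [h [Hh [-> ->]]]]].
      move=> F' HF HP; apply: (HP pi' Hp') => R'' x'' y'' Hxy; apply: HF; exact: Hh.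
    have Htree : is_tree (@TF _ s) by exists ord0; exact: tree_T.
    have Hg2 := hstable _ Hp _ _ Htree _ Hg'.
    right; exists pi; split => //; split => //; exists g; split => //.
  have Hsat1 := sat_mono HCF1 Hsat.
  have := P_all hSig hPi R0 t a HA (leqnn (sz s).+1); rewrite subnn; case=> c [H0 H1].
  apply: sle_trans H0 _.
  have HV : forall p (x : 'I_(sz s).+1), @TV _ s p x -> sle (N R0 s a c x) (a p).
    by move=> p x Hx; apply: N_atom.
  have HF : forall R (x y : 'I_(sz s).+1), List.In R (labs (cons_ (Impl s t))) -> F1 R x y ->
      sle (N R0 s a c x) (dia R (N R0 s a c y)).
    move=> R x y HR [HT|HAd]; first exact: N_edge.
    exact: sle_trans (N_cle R0 s a c x) (H1 _ _ _ HR HAd (leq0n _)).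
  exact: (labelling (a := a) (F := F1) (V := @TV _ s) (l := fun x => N R0 s a c x) HV HF Hsat1).
- move=> HS W F HF V w Hw.
  have H1 : forall s', Sigma' Pi s' -> slo_valid (PSLO F) s'.
    by move=> s' Hs'; apply/slo_frame; apply: HF.
  by have := proj1 (slo_frame F (Impl s t)) (HS (PSLO F) H1); apply.
Qed.
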